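(* Let $A$, $B$ be lattices, where $A$ is generated by a set of join prime elements and satisfies Whitman's condition (W). Let $g\colon A\to D$ and $h\colon B\to D$ be epimorphisms onto a lattice $D$. If the fiber product $\{(a,b)\in A\times B: g(a)=h(b)\}$ is a finitely generated sublattice of $A\times B$, then $h$ is lower bounded.
   Context: Whitman's condition (W): for all finite $S,T$, if $\bigwedge S\le\bigvee T$ then some $s\in S$ has $s\le\bigvee T$ or some $t\in T$ has $\bigwedge S\le t$. An element $p$ is join prime if $p\le x\vee y$ implies $p\le x$ or $p\le y$. A lattice homomorphism $h\colon B\to D$ is lower bounded if for every $d\in D$ the set $\{x\in B: h(x)\ge d\}$ is empty or has a least element. *)

(* Defs.v *)
From HB Require Import structures.
From mathcomp Require Import all_boot all_order.
Set Implicit Arguments. Unset Strict Implicit. Unset Printing Implicit Defensive.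
Import Order.TTheory.
Local Open Scope order_scope.

Section LatticeDefs.
Context {d : Order.disp_t} {L : latticeType d}.

Definition bigmeet (x : L) (s : seq L) : L := foldr Order.meet x s.
Definition bigjoin (x : L) (s : seq L) : L := foldr Order.join x s.

(* Whitman's condition (W), for nonempty finite S = s0::S', T = t0::T' *)
Definition whitman : Prop :=
  forall (s0 : L) (S : seq L) (t0 : L) (T : seq L),
    bigmeet s0 S <= bigjoin t0 T ->
    (exists2 s, s \in s0 :: S & s <= bigjoin t0 T) \/
    (exists2 t, t \in t0 :: T & bigmeet s0 S <= t).

Definition join_prime (p : L) : Prop :=
  forall x y : L, p <= x `|` y -> p <= x \/ p <= y.

Inductive gen (X : L -> Prop) : L -> Prop :=
  | gen_base x : X x -> gen X x
  | gen_meet x y : gen X x -> gen X y -> gen X (x `&` y)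
  | gen_join x y : gen X x -> gen X y -> gen X (x `|` y).

Definition generated_by_join_primes : Prop :=
  exists X : L -> Prop, (forall x, X x -> join_prime x) /\ (forall a, gen X a).
End LatticeDefs.

Definition lattice_hom {d1 d2} {L1 : latticeType d1} {L2 : latticeType d2}
  (f : L1 -> L2) : Prop :=
  (forall x y, f (x `&` y) = f x `&` f y) /\ (forall x y, f (x `|` y) = f x `|` f y).

(* epimorphism = surjective lattice homomorphism *)
Definition lattice_epi {d1 d2} {L1 : latticeType d1} {L2 : latticeType d2}
  (f : L1 -> L2) : Prop :=
  lattice_hom f /\ (forall y, exists x, f x = y).

Definition lower_bounded {d1 d2} {L1 : latticeType d1} {L2 : latticeType d2}
  (h : L1 -> L2) : Prop :=
  forall y : L2, (forall x : L1, ~ (y <= h x)) \/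
    (exists m : L1, y <= h m /\ forall x, y <= h x -> m <= x).

Inductive gen2 {d1 d2} {A : latticeType d1} {B : latticeType d2}
  (X : A * B -> Prop) : A * B -> Prop :=
  | gen2_base p : X p -> gen2 X p
  | gen2_meet p q : gen2 X p -> gen2 X q -> gen2 X (p.1 `&` q.1, p.2 `&` q.2)
  | gen2_join p q : gen2 X p -> gen2 X q -> gen2 X (p.1 `|` q.1, p.2 `|` q.2).

Definition fiber_product {d1 d2 d3} {A : latticeType d1} {B : latticeType d2}
  {D : latticeType d3} (g : A -> D) (h : B -> D) (p : A * B) : Prop :=
  g p.1 = h p.2.

(* the fiber product (always closed under componentwise meet/join when g,h are
   homomorphisms) is generated, as a sublattice of A x B, by finitely many of
   its elements *)
Definition fiber_product_fg {d1 d2 d3} {A : latticeType d1} {B : latticeType d2}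
  {D : latticeType d3} (g : A -> D) (h : B -> D) : Prop :=
  exists s : seq (A * B),
    (forall p, p \in s -> fiber_product g h p) /\
    (forall p, fiber_product g h p <-> gen2 (fun q => q \in s) p).

(* Main.v *)
Require Import Defs.
From HB Require Import structures.
From mathcomp Require Import all_boot all_order.
Import Order.TTheory.
Local Open Scope order_scope.

Definition mstep {dA dB} {A : latticeType dA} {B : latticeType dB}
  (a : A) (q acc : A * B) : A * B :=
  if a <= q.1 then (q.1 `&` acc.1, q.2 `&` acc.2) else acc.

Definition mfold {dA dB} {A : latticeType dA} {B : latticeType dB}
  (a : A) (c : A * B) (l : seq (A * B)) : A * B := foldr (mstep a) c l.

Lemma mfold_gen {dA dB} {A : latticeType dA} {B : latticeType dB}
  (X : A * B -> Prop) (a : A) (c : A * B) (l : seq (A * B)) :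
  (forall q, q \in l -> X q) -> gen2 X c -> gen2 X (mfold a c l).
Proof.
elim: l => [|q l IH] //= Hl Hc.
rewrite /mstep; case: ifP => _.
  apply: (gen2_meet (p := q)); first by apply: gen2_base; apply: Hl; rewrite inE eqxx.
  by apply: IH => // r Hr; apply: Hl; rewrite inE Hr orbT.
by apply: IH => // r Hr; apply: Hl; rewrite inE Hr orbT.
Qed.

Lemma mfold_le1 {dA dB} {A : latticeType dA} {B : latticeType dB}
  (a : A) (c : A * B) (l : seq (A * B)) :
  a <= c.1 -> a <= (mfold a c l).1.
Proof.
move=> Hc; elim: l => [|q l IH] //=.
rewrite /mstep; case: ifP => //= Hq.
by rewrite lexI Hq IH.
Qed.

Lemma mfold_le2 {dA dB} {A : latticeType dA} {B : latticeType dB}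
  (a : A) (c : A * B) (l : seq (A * B)) q :
  q \in l -> a <= q.1 -> (mfold a c l).2 <= q.2.
Proof.
elim: l => [|r l IH] //=.
rewrite inE => /orP [/eqP -> | Hq] Ha; rewrite /mstep.
  by rewrite Ha /= leIl.
case: ifP => _ /=; last exact: IH.
by apply: leIxr; apply: IH.
Qed.

Lemma mfold_lec {dA dB} {A : latticeType dA} {B : latticeType dB}
  (a : A) (c : A * B) (l : seq (A * B)) :
  (mfold a c l).2 <= c.2.
Proof.
elim: l => [|r l IH] //=.
rewrite /mstep; case: ifP => _ //=.
by apply: leIxr.
Qed.

Lemma beta {dA dB} {A : latticeType dA} {B : latticeType dB}
  (XA : A -> Prop) (s : seq (A * B)) :
  (forall x, XA x -> join_prime x) -> whitman (L := A) ->
  (forall a : A, exists c, gen2 (fun q => q \in s) c /\ a <= c.1) ->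
  forall a, gen XA a ->
  exists p, gen2 (fun q => q \in s) p /\ a <= p.1 /\
    forall q, gen2 (fun q => q \in s) q -> a <= q.1 -> p.2 <= q.2.
Proof.
move=> Hjp HW Hne a; elim=> {a}.
- move=> x Hx.
  have [c [Hc Hxc]] := Hne x.
  exists (mfold x c s); split; first by apply: mfold_gen.
  split; first by apply: mfold_le1.
  move=> q Hq; elim: Hq => {q}.
  + by move=> q Hq Hxq; apply: mfold_le2.
  + move=> p q _ IHp _ IHq /=; rewrite lexI => /andP [H1 H2].
    by rewrite lexI IHp // IHq.
  + move=> p q _ IHp _ IHq /= Hx'.
    case: (Hjp x Hx _ _ Hx') => H.
      by apply: le_trans (IHp H) _; apply: leUl.
    by apply: le_trans (IHq H) _; apply: leUr.
- move=> a1 a2 _ [p1 [G1 [L1 H1]]] _ [p2 [G2 [L2 H2]]].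
  set c := (p1.1 `&` p2.1, p1.2 `&` p2.2).
  have Gc : gen2 (fun q => q \in s) c by apply: gen2_meet.
  exists (mfold (a1 `&` a2) c s); split; first by apply: mfold_gen.
  split; first by apply: mfold_le1; rewrite /= leI2.
  move=> q Hq; elim: Hq => {q}.
  + by move=> q Hq Hxq; apply: mfold_le2.
  + move=> p q _ IHp _ IHq /=; rewrite lexI => /andP [E1 E2].
    by rewrite lexI IHp // IHq.
  + move=> p q Gp IHp Gq IHq /= Hx'.
    have Gpq : gen2 (fun q => q \in s) (p.1 `|` q.1, p.2 `|` q.2) by apply: gen2_join.
    have := HW a2 [:: a1] q.1 [:: p.1]; rewrite /bigmeet /bigjoin /= => HW'.
    case: (HW' Hx') => [[t] | [t]]; rewrite !inE => /orP [] /eqP -> Ht.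
    * apply: le_trans (mfold_lec _ _ _) _; apply: leIxr; exact: (H2 _ Gpq Ht).
    * apply: le_trans (mfold_lec _ _ _) _; apply: leIxl; exact: (H1 _ Gpq Ht).
    * by apply: le_trans (IHq Ht) _; apply: leUr.
    * by apply: le_trans (IHp Ht) _; apply: leUl.
- move=> a1 a2 _ [p1 [G1 [L1 H1]]] _ [p2 [G2 [L2 H2]]].
  exists (p1.1 `|` p2.1, p1.2 `|` p2.2); split; first by apply: gen2_join.
  split; first by rewrite /= leU2.
  move=> q Gq Hq /=; rewrite leUx.
  rewrite H1 ?H2 //.
    by apply: le_trans Hq; apply: leUr.
  by apply: le_trans Hq; apply: leUl.
Qed.

Lemma hom_mono {d1 d2} {L1 : latticeType d1} {L2 : latticeType d2} (f : L1 -> L2) :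
  lattice_hom f -> forall x y, x <= y -> f x <= f y.
Proof.
move=> [_ fJ] x y; rewrite leEjoin => /eqP E.
by rewrite leEjoin -fJ E.
Qed.

Theorem mainTheorem13 (dA dB dD : Order.disp_t)
  (A : latticeType dA) (B : latticeType dB) (D : latticeType dD)
  (g : A -> D) (h : B -> D) :
  generated_by_join_primes (L := A) ->
  whitman (L := A) ->
  lattice_epi g -> lattice_epi h ->
  fiber_product_fg g h ->
  lower_bounded h.
Proof.
move=> [X [HX Hgen]] HW [gH gS] [[hM hJ] hS] [s [Hs Hfp]] y.
right.
have [a ga] := gS y.
have Hne : forall a : A, exists c, gen2 (fun q => q \in s) c /\ a <= c.1.
  move=> a0; have [b hb] := hS (g a0).
  exists (a0, b); split => //; apply/Hfp; by rewrite /fiber_product /= hb.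
have [p [Gp [Lp Hp]]] := @beta _ _ A B X s HX HW Hne a (Hgen a).
exists p.2; split.
  rewrite -ga; have := (proj2 (Hfp p)) Gp; rewrite /fiber_product => <-.
  exact: hom_mono.
move=> x Hx; have [a' ga'] := gS (h x).
apply: (Hp (a `|` a', x)); last by apply: leUl.
apply/Hfp; rewrite /fiber_product /= (proj2 gH) ga ga'.
by apply/eqP; rewrite -leEjoin.
Qed.
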